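(* Every ideal of $\mathcal{A}$ is finitely generated.
   Context: Let $\mathbf{k}$ be a commutative noetherian ring, $r$ a positive integer, and $\mathcal{A}=\bigoplus_{n,d\ge0}(\mathrm{Sym}^d\mathbf{k}^r)^{\otimes n}$, bigraded by $(d,n)$. For a split $\sigma$ of $[n+m]$ (a subset $\{i_1<\cdots<i_n\}$ and its complement $\{j_1<\cdots<j_m\}$), the shuffle product $\cdot_\sigma:(\mathrm{Sym}^d\mathbf{k}^r)^{\otimes n}\otimes(\mathrm{Sym}^d\mathbf{k}^r)^{\otimes m}\to(\mathrm{Sym}^d\mathbf{k}^r)^{\otimes(n+m)}$ puts the factors of the first argument in positions $i_1,\dots,i_n$ and those of the second in positions $j_1,\dots,j_m$. The product $*:(\mathrm{Sym}^d\mathbf{k}^r)^{\otimes n}\otimes(\mathrm{Sym}^e\mathbf{k}^r)^{\otimes n}\to(\mathrm{Sym}^{d+e}\mathbf{k}^r)^{\otimes n}$ is factorwise multiplication. All other products are $0$. An ideal of $\mathcal{A}$ is a bihomogeneous subspace $I$ such that $g*f\in I$ and $g\cdot_\sigma f\in I$ for all $f\in I$, $g\in\mathcal{A}$ and all splits $\sigma$; it is finitely generated if it is the smallest ideal containing some finite subset. *)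

(* Defs.v *)
From HB Require Import structures.
From mathcomp Require Import all_boot all_order all_algebra.
From mathcomp Require Import mpoly.
Set Implicit Arguments. Unset Strict Implicit. Unset Printing Implicit Defensive.
Import GRing.Theory.
Local Open Scope ring_scope.

Definition ring_ideal (k : comNzRingType) (J : k -> Prop) : Prop :=
  [/\ J 0, (forall x y, J x -> J y -> J (x + y)) & (forall c x, J x -> J (c * x))].

Definition noetherian (k : comNzRingType) : Prop :=
  forall J : k -> Prop, ring_ideal J ->
    exists s : seq k, forall x, J x <-> exists c : 'I_(size s) -> k,
        x = \sum_(i < size s) c i * s`_i.

(* Model of (Sym^d k^r)^{(x) n}: the multihomogeneous polynomials over k
   in the n*r variables x_{i,j} (i < n, j < r), variable x_{i,j} being
   'X_(mxvec_index i j), homogeneous of degree d in each block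
   {x_{i,0},...,x_{i,r-1}}.                                             *)
Definition var (k : comNzRingType) (n r : nat) (i : 'I_n) (j : 'I_r)
  : {mpoly k[n * r]} := 'X_(mxvec_index i j).

Definition multihom (k : comNzRingType) (r d n : nat) (p : {mpoly k[n * r]}) : Prop :=
  forall m, m \in msupp p -> forall i : 'I_n, (\sum_(j < r) m (mxvec_index i j))%N = d.

Definition blk (n r : nat) (v : 'I_(n * r)) : 'I_n * 'I_r :=
  enum_val (cast_ord (esym (mxvec_cast n r)) v).

Definition relabel (k : comNzRingType) (r n N : nat) (a : 'I_n -> 'I_N)
  (p : {mpoly k[n * r]}) : {mpoly k[N * r]} :=
  mmap (@mpolyC _ k) (fun v => var k (a (blk v).1) (blk v).2) p.

(* a split of [n+m]: strictly increasing a : 'I_n -> 'I_(n+m) (positions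
   i_1 < ... < i_n) and b : 'I_m -> 'I_(n+m) (positions j_1 < ... < j_m)
   with disjoint images (hence complementary). *)
Definition is_split (n m : nat) (a : 'I_n -> 'I_(n + m)) (b : 'I_m -> 'I_(n + m)) : Prop :=
  [/\ (forall i j : 'I_n, (i < j)%N -> (a i < a j)%N),
      (forall i j : 'I_m, (i < j)%N -> (b i < b j)%N) &
      (forall i j, a i != b j)].

Definition shuffle (k : comNzRingType) (r n m : nat)
  (a : 'I_n -> 'I_(n + m)) (b : 'I_m -> 'I_(n + m))
  (g : {mpoly k[n * r]}) (f : {mpoly k[m * r]}) : {mpoly k[(n + m) * r]} :=
  @relabel k r n (n + m) a g * @relabel k r m (n + m) b f.

(* A bihomogeneous subspace I = (+)_{d,n} I_{d,n} is given by its components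
   I d n : predicate on (Sym^d k^r)^{(x) n}. *)
Definition bihomset (k : comNzRingType) (r : nat) :=
  forall d n : nat, {mpoly k[n * r]} -> Prop.

Definition is_ideal (k : comNzRingType) (r : nat) (I : bihomset k r) : Prop :=
  (forall d n p, I d n p -> @multihom k r d n p) /\
  [/\ (forall d n, I d n 0),
      (forall d n p q, I d n p -> I d n q -> I d n (p + q)),
      (forall d n (c : k) p, I d n p -> I d n (c *: p)),
      (forall d e n (f g : {mpoly k[n * r]}),
          I d n f -> @multihom k r e n g -> I (d + e) n (g * f)) &
      (forall d n m (a : 'I_n -> 'I_(n + m)) (b : 'I_m -> 'I_(n + m))
              (g : {mpoly k[n * r]}) (f : {mpoly k[m * r]}),
          is_split a b -> @multihom k r d n g -> I d m f ->
          I d (n + m) (shuffle a b g f))].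

Definition generated (k : comNzRingType) (r N : nat) (dg ng : 'I_N -> nat)
  (G : forall i : 'I_N, {mpoly k[ng i * r]}) : bihomset k r :=
  fun d n p => forall J : bihomset k r, is_ideal J ->
     (forall i, J (dg i) (ng i) (G i)) -> J d n p.

Definition fin_generated (k : comNzRingType) (r : nat) (I : bihomset k r) : Prop :=
  exists N (dg ng : 'I_N -> nat) (G : forall i : 'I_N, {mpoly k[ng i * r]}),
    forall d n p, I d n p <-> @generated k r N dg ng G d n p.

(* Main.v *)
Require Import Defs.
From HB Require Import structures.
From mathcomp Require Import all_boot all_order all_algebra.
From mathcomp Require Import mpoly.
From Stdlib Require Import ClassicalEpsilon Classical.
Set Implicit Arguments. Unset Strict Implicit. Unset Printing Implicit Defensive.
Import Order.TTheory GRing.Theory.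


Lemma choice_fun (A B : Type) (P : A -> B -> Prop) :
  (forall a, exists b, P a b) -> exists f : A -> B, forall a, P a (f a).
Proof.
move=> H.
exists (fun a => proj1_sig (constructive_indefinite_description _ (H a))).
move=> a; exact: (proj2_sig (constructive_indefinite_description _ (H a))).
Qed.

Lemma min_exists (P : nat -> Prop) : (exists n, P n) ->
  exists n, P n /\ forall m, P m -> n <= m.
Proof.
move=> [n Pn]; elim/ltn_ind: n Pn => n IH Pn.
case: (classic (exists m, P m /\ m < n)) => [[m [Pm lt]]|H].
  exact: (IH m lt Pm).
exists n; split => // m Pm; rewrite leqNgt; apply/negP => lt; apply: H; by exists m.
Qed.

Section WQO.
Variables (T : Type) (R : T -> T -> Prop).
Definition good (s : nat -> T) := exists i j, i < j /\ R (s i) (s j).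
Definition wqo := forall s, good s.
Definition AS := forall s : nat -> T, exists sg : nat -> nat,
  (forall i, sg i < sg i.+1) /\ (forall i, R (s (sg i)) (s (sg i.+1))).

Lemma wqo_AS : wqo -> AS.
Proof.
move=> W s.
pose term i := ~ exists j, i < j /\ R (s i) (s j).
have [N HN] : exists N, forall i, N <= i -> ~ term i.
  apply: NNPP => H.
  have H' : forall N, exists i, N <= i /\ term i.
    move=> N; apply: NNPP => H2; apply: H; exists N => i Hi Ti; apply: H2.
    by exists i.
  have [g Hg] := choice_fun H'.
  pose tau := fix tau p := if p is p'.+1 then g (tau p').+1 else g 0.
  have Htau : forall p, tau p < tau p.+1 by move=> p /=; case: (Hg (tau p).+1).
  have Ttau : forall p, term (tau p).
    by case=> [|p] /=; [case: (Hg 0)|case: (Hg (tau p).+1)].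
  have mono := homo_ltn ltn_trans Htau.
  have [i [j [lt Rij]]] := W (fun p => s (tau p)).
  apply: (Ttau i); exists (tau j); split => //; exact: mono.
have H' : forall i, exists j, N <= i -> i < j /\ R (s i) (s j).
  move=> i; case: (leqP N i) => Hi.
    by have := HN i Hi; move/NNPP => [j Hj]; exists j.
  by exists 0.
have [g Hg] := choice_fun H'.
pose sg := fix sg p := if p is p'.+1 then g (sg p') else N.
have Hge : forall p, N <= sg p.
  elim=> [|p IH] //=; case: (Hg (sg p) IH) => lt _; exact: leq_trans (ltnW lt).
by exists sg; split => i; case: (Hg (sg i) (Hge i)).
Qed.

Lemma AS_wqo : AS -> wqo.
Proof. move=> H s; have [sg [H1 H2]] := H s; by exists (sg 0), (sg 1). Qed.

End WQO.

Lemma AS_and (T : Type) (R1 R2 : T -> T -> Prop) :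
  (forall y x z, R1 x y -> R1 y z -> R1 x z) ->
  AS R1 -> AS R2 -> AS (fun x y => R1 x y /\ R2 x y).
Proof.
move=> t1 A1 A2 s; have [s1 [i1 r1]] := A1 s.
have [s2 [i2 r2]] := A2 (fun i => s (s1 i)).
exists (fun i => s1 (s2 i)); split=> i.
  exact: (homo_ltn ltn_trans i1) (i2 i).
split; last exact: r2.
exact: (homo_ltn t1 r1) (i2 i).
Qed.

Lemma AS_pull (T U : Type) (R : U -> U -> Prop) (f : T -> U) :
  AS R -> AS (fun x y => R (f x) (f y)).
Proof. move=> A s; exact: A (fun i => f (s i)). Qed.

Lemma AS_ext (T : Type) (R1 R2 : T -> T -> Prop) :
  (forall x y, R1 x y -> R2 x y) -> AS R1 -> AS R2.
Proof.
move=> H A s; have [sg [h1 h2]] := A s; exists sg; split=> // i; exact: H.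
Qed.

Lemma wqo_nat : wqo leq.
Proof.
move=> s.
have [v [[i Hi] Hmin]] := min_exists (ex_intro (fun v => exists i, s i = v) (s 0) (ex_intro _ 0 erefl)).
exists i, i.+1; split=> //; rewrite Hi; apply: Hmin; by exists i.+1.
Qed.

Lemma AS_nat : AS leq.
Proof. exact: wqo_AS wqo_nat. Qed.

Lemma AS_mnm (r : nat) : AS (fun m1 m2 : 'X_{1..r} => forall j, m1 j <= m2 j).
Proof.
suff H : forall l : seq 'I_r, AS (fun m1 m2 : 'X_{1..r} => forall j, j \in l -> m1 j <= m2 j).
  apply: AS_ext (H (enum 'I_r)) => x y Hxy j; apply: Hxy; by rewrite mem_enum.
elim=> [|j l IH].
  move=> s; exists id; split=> // i j; by rewrite in_nil.
apply: AS_ext (AS_and _ (AS_pull (fun m : 'X_{1..r} => m j) AS_nat) IH).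
  move=> x y [H1 H2] j'; rewrite in_cons => /orP [/eqP ->|]; [exact: H1|exact: H2].
move=> y x z h1 h2; exact: leq_trans h1 h2.
Qed.

Section Higman.
Variables (T : Type) (R : T -> T -> Prop).
Hypothesis Rt : forall y x z, R x y -> R y z -> R x z.
Hypothesis RAS : AS R.

Fixpoint emb (u v : seq T) : Prop :=
  match v with
  | [::] => u = [::]
  | y :: v' => emb u v' \/ (match u with [::] => True | x :: u' => R x y /\ emb u' v' end)
  end.

Lemma emb_nil v : emb [::] v.
Proof. by case: v => [|y v] //=; right. Qed.

Lemma emb_trans v u w : emb u v -> emb v w -> emb u w.
Proof.
elim: w u v => [|z w IH] u v /=.
  by move=> H E; move: H; rewrite E; case: u.
move=> Huv [Hvw|Hvw].
  left. exact: (IH u v Huv Hvw).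
move: Huv Hvw; case: v => [|y v] Huv Hvw.
  by move: Huv => /= ->; right.
case: Hvw => Ryz Hvw; case: Huv => [Huv|].
  by left; exact: IH Huv Hvw.
case: u => [|x u] //; first by move=> _; right.
move=> [Rxy Huv]; right; split; [exact: Rt Rxy Ryz|exact: IH Huv Hvw].
Qed.

Definition extl (l : seq (seq T)) (s : nat -> seq T) :=
  forall i, i < size l -> s i = nth [::] l i.
Definition bad (s : nat -> seq T) := ~ good emb s.
Definition extendable l := exists s, bad s /\ extl l s.

Lemma extl_rcons l w s : extl (rcons l w) s <-> extl l s /\ s (size l) = w.
Proof.
split.
  move=> H; split.
    move=> i Hi; rewrite H; first by rewrite nth_rcons Hi.
    by rewrite size_rcons ltnS ltnW.
  by rewrite H ?size_rcons // nth_rcons ltnn eqxx.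
move=> [H1 H2] i; rewrite size_rcons ltnS leq_eqVlt => /orP [/eqP ->|Hi].
  by rewrite nth_rcons ltnn eqxx.
by rewrite nth_rcons Hi H1.
Qed.

Lemma higman : wqo emb.
Proof.
move=> s0; apply: NNPP => bad0.
have Hstep : forall l, exists w, extendable l ->
    extendable (rcons l w) /\ forall w', extendable (rcons l w') -> size w <= size w'.
  move=> l; case: (classic (extendable l)) => [[s [bs es]]|]; last first.
    by move=> H; exists [::].
  have Hex : exists n, exists w, size w = n /\ extendable (rcons l w).
    exists (size (s (size l))), (s (size l)); split => //.
    by exists s; split => //; apply/extl_rcons.
  have [n [[w [Hw Ew]] Hmin]] := min_exists Hex.
  exists w => _; split => // w' Ew'; rewrite Hw; apply: Hmin; by exists w'.
have [st Hst] := choice_fun Hstep.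
pose pre := fix pre n := if n is n'.+1 then rcons (pre n') (st (pre n')) else [::].
pose f n := st (pre n).
have size_pre : forall n, size (pre n) = n.
  by elim=> [|n IH] //=; rewrite size_rcons IH.
have ext_pre : forall n, extendable (pre n).
  elim=> [|n IH]; first by exists s0; split => // i.
  by have [] := Hst _ IH.
have nth_pre : forall n i, i < n -> nth [::] (pre n) i = f i.
  elim=> [|n IH] i //= Hi; rewrite nth_rcons size_pre.
  case: ltnP => Hin; first exact: IH.
  have -> : i = n by apply/eqP; rewrite eqn_leq Hin -ltnS Hi.
  by rewrite eqxx.
have badf : forall i j, i < j -> ~ emb (f i) (f j).
  move=> i j lt E; have [s [bs es]] := ext_pre j.+1.
  apply: bs; exists i, j; split => //.
  rewrite !es ?size_pre ?nth_pre //; exact: ltnW.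
have nonnil : forall n, f n <> [::].
  by move=> n E; apply: (badf n n.+1) => //; rewrite E; exact: emb_nil.
have [x0 _] : exists x0 : T, True.
  by case E: (f 0) => [|x0 w]; [exfalso; exact: nonnil E|exists x0].
pose hd n := head x0 (f n); pose tl n := behead (f n).
have fE : forall n, f n = hd n :: tl n.
  by move=> n; rewrite /hd /tl; case E: (f n) => [|x w] //; exfalso; exact: nonnil E.
have [sg [sgi sgR]] := RAS hd.
have sgm := homo_ltn ltn_trans sgi.
have sgRm := homo_ltn Rt sgR.
have sg0 : forall q, sg 0 <= sg q.
  by case=> [|q] //; apply: ltnW; apply: sgm.
pose g i := if i < sg 0 then f i else tl (sg (i - sg 0)).
have bg : bad g.
  move=> [i [j [lt E]]]; move: E; rewrite /g.
  case: (ltnP j (sg 0)) => Hj.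
    rewrite (ltn_trans lt Hj) => E; exact: badf lt E.
  case: (ltnP i (sg 0)) => Hi E.
    apply: (badf i (sg (j - sg 0))); first exact: leq_trans Hi (sg0 _).
    by rewrite [f (sg _)]fE /=; left.
  have lt' : i - sg 0 < j - sg 0 by rewrite ltn_sub2rE.
  apply: (badf (sg (i - sg 0)) (sg (j - sg 0))); first exact: sgm.
  rewrite !fE /=; right; split => //; exact: sgRm.
have : extendable (rcons (pre (sg 0)) (tl (sg 0))).
  exists g; split => //; apply/extl_rcons; split.
    move=> i; rewrite size_pre => Hi; rewrite nth_pre // /g Hi //.
  by rewrite size_pre /g ltnn subnn.
move/(proj2 (Hst _ (ext_pre (sg 0)))) => /=.
by rewrite -/(f (sg 0)) fE /= ltnn.
Qed.
End Higman.

Definition Rm (r : nat) (m1 m2 : 'X_{1..r}) := forall j, m1 j <= m2 j.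
Definition Rp (r : nat) (x y : nat * seq 'X_{1..r}) := x.1 <= y.1 /\ emb (@Rm r) x.2 y.2.

Lemma Rp_chain (r : nat) (s : nat -> nat * seq 'X_{1..r}) :
  exists sg : nat -> nat, (forall p q, p < q -> sg p < sg q) /\
     (forall p q, p < q -> Rp (s (sg p)) (s (sg q))).
Proof.
have RmT : forall y x z, @Rm r x y -> Rm y z -> Rm x z.
  move=> y x z h1 h2 j; exact: leq_trans (h1 j) (h2 j).
have A : AS (@Rp r).
  apply: AS_and; first by move=> y x z; apply: leq_trans.
    exact: AS_pull AS_nat.
  apply: AS_pull; apply: wqo_AS; apply: higman => //; exact: AS_mnm.
have [sg [h1 h2]] := A s.
exists sg; split; first exact: homo_ltn ltn_trans h1.
apply: homo_ltn h2 => y x z [a1 a2] [b1 b2]; split; first exact: leq_trans a1 b1.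
exact: (@emb_trans _ (@Rm r) RmT _ _ _ a2 b2).
Qed.

Definition rl (n1 n2 : nat) (phi : 'I_n1 -> 'I_n2) (m : 'X_{1..n1}) : 'X_{1..n2} :=
  [multinom (\sum_(v < n1 | phi v == w) m v)%N | w < n2].

Section RL.
Variables (n1 n2 : nat) (phi : 'I_n1 -> 'I_n2).
Hypothesis phi_inj : injective phi.

Lemma rlE m w : rl phi m w = (\sum_(v < n1 | phi v == w) m v)%N.
Proof. by rewrite /rl mnmE. Qed.

Lemma rl_in m v : rl phi m (phi v) = m v.
Proof.
rewrite rlE (big_pred1 v) // => u /=; apply/eqP/eqP => [/phi_inj|->] //.
Qed.

Lemma rl_out m w : (forall v, phi v != w) -> rl phi m w = 0%N.
Proof. by move=> H; rewrite rlE big_pred0 // => v; rewrite (negbTE (H v)). Qed.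

Lemma mdeg_rl m : mdeg (rl phi m) = mdeg m.
Proof.
rewrite !mdegE; under eq_bigr do rewrite rlE.
by rewrite (exchange_big_dep xpredT) //=; apply: eq_bigr => v _; rewrite (big_pred1 (phi v)).
Qed.

Lemma rl_inj : injective (rl phi).
Proof. by move=> m1 m2 E; apply/mnmP => v; rewrite -!rl_in E. Qed.

Lemma rlD m1 m2 : rl phi (m1 + m2)%MM = (rl phi m1 + rl phi m2)%MM.
Proof. by apply/mnmP => w; rewrite mnmDE !rlE -big_split; apply: eq_bigr => v _; rewrite mnmDE. Qed.

End RL.

Lemma rl_lt (n1 n2 : nat) (phi : 'I_n1 -> 'I_n2)
  (Hinc : forall u v : 'I_n1, u < v -> phi u < phi v) m1 m2 :
  (m1 < m2)%O -> (rl phi m1 < rl phi m2)%O.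
Proof.
have inj : injective phi.
  move=> u v E; apply/val_inj/eqP; case: (ssrnat.ltngtP u v) => // /Hinc; by rewrite E ltnn.
move=> lt; have := lemc_mdeg (ltW lt); rewrite leq_eqVlt => /orP [/eqP E|H]; last first.
  by apply: lt_mdeg_ltmc; rewrite !mdeg_rl.
move: lt => /ltmcP -/(_ E) [i Hj Hi].
apply/ltmcP; first by rewrite !mdeg_rl.
exists (phi i); last by rewrite !rl_in.
move=> j; case: (boolP [exists v, phi v == j]) => [/existsP [v /eqP <-]|/existsPn H] Hji.
  rewrite !rl_in //; apply: Hj; rewrite ltnNge; apply/negP => Hle.
  move: Hji; rewrite leq_eqVlt in Hle; case/orP: Hle => [/eqP/val_inj ->|/Hinc H'].
    by rewrite ssrnat.ltnn.
  by rewrite ltnNge ltnW.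
by rewrite !rl_out.
Qed.

Lemma rl_le (n1 n2 : nat) (phi : 'I_n1 -> 'I_n2)
  (Hinc : forall u v : 'I_n1, u < v -> phi u < phi v) m1 m2 :
  (m1 <= m2)%O -> (rl phi m1 <= rl phi m2)%O.
Proof. by rewrite le_eqVlt => /orP [/eqP ->|/(rl_lt Hinc)/ltW]. Qed.

Lemma index_allpairs (T1 T2 : eqType) (s : seq T1) (t : seq T2) x y :
  x \in s -> y \in t ->
  index (x, y) [seq (a, b) | a <- s, b <- t] = (index x s * size t + index y t)%N.
Proof.
elim: s => [|a s IH] //= Hx Hy; rewrite index_cat.
have -> : ((x, y) \in [seq (a, b) | b <- t]) = (x == a).
  apply/mapP/eqP => [[b _ [->]]|->] //; by exists y.
case: eqP => [->|/eqP ne]; first by rewrite eqxx /= index_map //; move=> u v [].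
rewrite /= IH //.
  by rewrite eq_sym (negbTE ne) size_map mulSn addnA.
by move: Hx; rewrite in_cons (negbTE ne).
Qed.

Lemma enum_prodE (m n : nat) :
  enum {: 'I_m * 'I_n} = [seq (a, b) | a <- enum 'I_m, b <- enum 'I_n].
Proof. by rewrite enumT unlock. Qed.

Lemma enum_rank_val (T : finType) (x : T) : val (enum_rank x) = index x (enum T).
Proof.
have E := nth_enum_rank x x.
by rewrite -{2}E index_uniq ?enum_uniq // -cardE ltn_ord.
Qed.

Lemma mxvec_index_val (n r : nat) (i : 'I_n) (j : 'I_r) :
  val (mxvec_index i j) = (i * r + j)%N.
Proof.
rewrite /mxvec_index /= enum_rank_val enum_prodE index_allpairs ?mem_enum //.
by rewrite !index_enum_ord size_enum_ord.
Qed.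

Lemma blkK (n r : nat) (i : 'I_n) (j : 'I_r) : blk (mxvec_index i j) = (i, j).
Proof. by rewrite /blk /mxvec_index cast_ordK enum_rankK. Qed.

Lemma blk_inv (n r : nat) (v : 'I_(n * r)) : mxvec_index (blk v).1 (blk v).2 = v.
Proof. by case/mxvec_indexP: v => i j; rewrite blkK. Qed.

Definition vmap (n N r : nat) (a : 'I_n -> 'I_N) (v : 'I_(n * r)) : 'I_(N * r) :=
  mxvec_index (a (blk v).1) (blk v).2.

Lemma vmap_in (n N r : nat) (a : 'I_n -> 'I_N) (i : 'I_n) (j : 'I_r) :
  vmap a (mxvec_index i j) = mxvec_index (a i) j.
Proof. by rewrite /vmap blkK. Qed.

From mathcomp Require Import zify.

Lemma vmap_inc (n N r : nat) (a : 'I_n -> 'I_N) :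
  (forall i j : 'I_n, i < j -> a i < a j) ->
  forall u v : 'I_(n * r), u < v -> vmap (r := r) a u < vmap a v.
Proof.
move=> Ha u v; case/mxvec_indexP: u => i1 j1; case/mxvec_indexP: v => i2 j2.
rewrite !vmap_in !mxvec_index_val.
have h1 := ltn_ord j1; have h2 := ltn_ord j2.
case: (ssrnat.ltngtP i1 i2) => [lt|gt|/val_inj eq].
- have := Ha _ _ lt; nia.
- nia.
- rewrite eq; nia.
Qed.

Lemma vmap_inj (n N r : nat) (a : 'I_n -> 'I_N) :
  (forall i j : 'I_n, i < j -> a i < a j) -> injective (vmap (r := r) a).
Proof.
move=> Ha u v E; apply/val_inj/eqP; case: (ssrnat.ltngtP u v) => // /(vmap_inc Ha);
  by rewrite E ssrnat.ltnn.
Qed.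

Lemma relabelE (k : comNzRingType) (r n N : nat) (a : 'I_n -> 'I_N) (p : {mpoly k[n * r]}) :
  relabel a p = (\sum_(m <- msupp p) p@_m *: 'X_[rl (vmap a) m])%R.
Proof.
rewrite /relabel /mmap; apply: eq_bigr => m _; rewrite mul_mpolyC; congr (GRing.scale _ _).
rewrite /mmap1 /var.
rewrite mprodXnE; congr mpolyX.
apply/mnmP => w; rewrite mnm_sumE rlE [RHS]big_mkcond /=; apply: eq_bigr => v _.
by rewrite mulmnE mnm1E; case: eqP => _; rewrite ?mul1n ?mul0n.
Qed.

Section RelabelCoef.
Local Open Scope ring_scope.
Variables (k : comNzRingType) (n1 n2 : nat) (phi : 'I_n1 -> 'I_n2).
Hypothesis phi_inj : injective phi.
Variable p : {mpoly k[n1]}.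
Let q : {mpoly k[n2]} := (\sum_(m <- msupp p) p@_m *: 'X_[rl phi m])%R.

Lemma qcoefE mu : q@_mu = (\sum_(m <- msupp p) p@_m * (rl phi m == mu)%:R)%R.
Proof. by rewrite /q raddf_sum; apply: eq_bigr => m _ /=; rewrite mcoeffZ mcoeffX. Qed.

Lemma qcoef_rl m0 : q@_(rl phi m0) = p@_m0.
Proof.
rewrite qcoefE; case: (boolP (m0 \in msupp p)) => H.
  rewrite (bigD1_seq m0) ?msupp_uniq //= eqxx GRing.mulr1 big1 ?GRing.addr0 // => m ne.
  by rewrite (inj_eq (rl_inj phi_inj)) (negbTE ne) GRing.mulr0.
rewrite (memN_msupp_eq0 H) big_seq big1 // => m Hm.
rewrite (inj_eq (rl_inj phi_inj)); case: eqP => [E|]; last by rewrite GRing.mulr0.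
by move: H; rewrite -E Hm.
Qed.

Lemma qsupp mu : mu \in msupp q -> exists2 m, m \in msupp p & mu = rl phi m.
Proof.
move=> H; apply: NNPP => N; move: H; rewrite mcoeff_msupp qcoefE big_seq big1 ?eqxx //.
move=> m Hm; case: eqP => [E|]; last by rewrite GRing.mulr0.
by exfalso; apply: N; exists m.
Qed.
End RelabelCoef.

Definition ins (T : Type) (p : nat) (w : T) (s : seq T) := take p s ++ w :: drop p s.

Lemma size_ins (T : Type) p (w : T) s : p <= size s -> size (ins p w s) = (size s).+1.
Proof. by move=> H; rewrite /ins size_cat /= (size_takel H) size_drop; lia. Qed.

Lemma nth_ins (T : Type) x0 (s : seq T) p w i : p <= size s ->
  nth x0 (ins p w s) i = if i < p then nth x0 s i else if i == p then w else nth x0 s i.-1.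
Proof.
move=> H; rewrite /ins nth_cat (size_takel H).
case: ltnP => Hi; first by rewrite nth_take.
case: eqP => [->|ne]; first by rewrite subnn.
have : p < i by rewrite ltn_neqAle eq_sym; apply/andP; split => //; apply/eqP.
case: i Hi ne => [|i] //= Hi ne Hpi; rewrite subSn //= nth_drop; congr nth; lia.
Qed.

Definition block (n r : nat) (m : 'X_{1..n * r}) (i : 'I_n) : 'X_{1..r} :=
  [multinom m (mxvec_index i j) | j < r].
Definition word (n r : nat) (m : 'X_{1..n * r}) : seq 'X_{1..r} :=
  [seq block m i | i <- enum 'I_n].

Lemma size_word n r (m : 'X_{1..n * r}) : size (word m) = n.
Proof. by rewrite size_map size_enum_ord. Qed.

Lemma nth_word n r (m : 'X_{1..n * r}) (i : 'I_n) : nth 0%MM (word m) i = block m i.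
Proof. by rewrite (nth_map i) ?size_enum_ord // nth_ord_enum. Qed.

Lemma mxvec_index_inj n r (i i' : 'I_n) (j j' : 'I_r) :
  mxvec_index i j = mxvec_index i' j' -> i = i' /\ j = j'.
Proof. by move/(congr1 (@blk n r)); rewrite !blkK => [[-> ->]]. Qed.

Local Open Scope ring_scope.

Definition LTc (k : comNzRingType) (N : nat) (f : {mpoly k[N]}) (al : 'X_{1..N}) (c : k) :=
  f@_al = c /\ forall m, m \in msupp f -> (m <= al)%O.

Lemma relabel_coef (k : comNzRingType) (r n N : nat) (a : 'I_n -> 'I_N)
  (Ha : forall i j : 'I_n, (i < j)%N -> (a i < a j)%N) (p : {mpoly k[n * r]}) m :
  (relabel a p)@_(rl (vmap a) m) = p@_m.
Proof. by rewrite relabelE qcoef_rl //; exact: vmap_inj. Qed.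

Lemma relabel_supp (k : comNzRingType) (r n N : nat) (a : 'I_n -> 'I_N)
  (Ha : forall i j : 'I_n, (i < j)%N -> (a i < a j)%N) (p : {mpoly k[n * r]}) mu :
  mu \in msupp (relabel a p) -> exists2 m, m \in msupp p & mu = rl (vmap a) m.
Proof. by rewrite relabelE => /qsupp; apply; exact: vmap_inj. Qed.

Lemma relabelX (k : comNzRingType) (r n N : nat) (a : 'I_n -> 'I_N) (m : 'X_{1..n * r}) :
  relabel a ('X_[m] : {mpoly k[n * r]}) = 'X_[rl (vmap a) m].
Proof. by rewrite relabelE msuppX big_seq1 mcoeffX eqxx GRing.scale1r. Qed.

Lemma LTc_mulX (k : comNzRingType) (N : nat) (q : {mpoly k[N]}) (A al : 'X_{1..N}) c :
  LTc q al c -> LTc ('X_[A] * q)%R (A + al)%MM c.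
Proof.
move=> [h1 h2]; split; first by rewrite GRing.mulrC mcoeffMX.
move=> m; rewrite GRing.mulrC (perm_mem (msuppMX _ _)) => /mapP [m' Hm' ->].
by rewrite lemc_add2r; apply: h2.
Qed.

Lemma ins_step (k : comNzRingType) (r : nat) (J : bihomset k r) (HJ : is_ideal J)
  d n (f : {mpoly k[n * r]}) al c (w : 'X_{1..r}) p :
  mdeg w = d -> (p <= n)%N -> J d n f -> LTc f al c ->
  exists (h : {mpoly k[n.+1 * r]}) al', J d n.+1 h /\ LTc h al' c /\ word al' = ins p w (word al).
Proof.
move=> Hw Hpn Hf [Lc Ls].
case: HJ => _ [_ _ _ _ JS].
have Hp : (p < n.+1)%N by [].
pose p0 : 'I_n.+1 := Ordinal Hp.
pose a : 'I_1 -> 'I_(1 + n) := fun _ => p0.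
pose b : 'I_n -> 'I_(1 + n) := lift p0.
pose W : 'X_{1..1 * r} := [multinom w (blk v).2 | v < 1 * r].
have Ha : forall i j : 'I_1, (i < j)%N -> (a i < a j)%N.
  by move=> i j; rewrite (ord1 i) (ord1 j).
have Hb : forall i j : 'I_n, (i < j)%N -> (b i < b j)%N.
  move=> i j; rewrite /b /= /bump.
  by case: leqP => ?; case: leqP => ?; rewrite /= ?add0n ?add1n; lia.
have Hsp : is_split a b.
  by split => // i j; rewrite /a /b; exact: neq_lift.
have HW : @multihom k r d 1 'X_[W].
  move=> m; rewrite msuppX mem_seq1 => /eqP -> i; rewrite -Hw mdegE.
  by apply: eq_bigr => j _; rewrite mnmE blkK.
have HJh := JS d 1 n a b 'X_[W] f Hsp HW Hf.
exists (shuffle a b 'X_[W] f), (rl (vmap a) W + rl (vmap b) al)%MM.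
split => //; split.
  rewrite /shuffle relabelX; apply: LTc_mulX; split; first by rewrite relabel_coef.
  move=> m /(relabel_supp Hb) [m' Hm' ->]; apply: rl_le; first exact: vmap_inc.
  exact: Ls.
apply: (@eq_from_nth _ 0%MM); first by rewrite size_word size_ins ?size_word.
move=> i; rewrite size_word => Hi.
rewrite -[i]/(val (Ordinal Hi : 'I_(1 + n))) nth_word nth_ins ?size_word //.
apply/mnmP => j; rewrite mnmE mnmDE.
case: (unliftP p0 (Ordinal Hi : 'I_(1 + n))) => [i'' E|E]; rewrite E.
- rewrite (@rl_out _ _ (vmap (r := r) a)); last first.
    case/mxvec_indexP => v1 v2; rewrite vmap_in; apply/eqP => /mxvec_index_inj [E1 _].
    by move: (neq_lift p0 i''); rewrite -E1 eqxx.
  rewrite -vmap_in rl_in; last exact: vmap_inj.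
  rewrite add0n /= /bump; case: (leqP p i'') => H /=.
    rewrite add1n; have -> : (i''.+1 < p)%N = false by lia.
    have -> : (i''.+1 == p) = false by lia.
    by rewrite /= nth_word mnmE.
  by rewrite add0n H nth_word mnmE.
- rewrite -[mxvec_index p0 j]/(mxvec_index (a ord0) j) -vmap_in rl_in; last exact: vmap_inj.
  rewrite (@rl_out _ _ (vmap (r := r) b)); last first.
    case/mxvec_indexP => v1 v2; rewrite vmap_in; apply/eqP => /mxvec_index_inj [E1 _].
    by move: (neq_lift p0 v1); rewrite /b in E1; rewrite E1 eqxx.
  by rewrite addn0 /= ltnn eqxx mnmE blkK.
Qed.

Inductive Ins (r d : nat) : seq 'X_{1..r} -> seq 'X_{1..r} -> Prop :=
| Ins_refl u : Ins d u u
| Ins_step u v p w : Ins d u v -> mdeg w = d -> (p <= size v)%N -> Ins d u (ins p w v).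

Lemma Ins_cons r d (x : 'X_{1..r}) u v : Ins d u v -> Ins d (x :: u) (x :: v).
Proof.
elim=> [u'|u' v' p w _ IH Hw Hp]; first exact: Ins_refl.
have -> : x :: ins p w v' = ins p.+1 w (x :: v') by [].
exact: Ins_step.
Qed.

Lemma all_ins (T : Type) (P : pred T) p w (s : seq T) : all P (ins p w s) = P w && all P s.
Proof.
by rewrite /ins all_cat /= -{3}(cat_take_drop p s) all_cat andbCA.
Qed.

Lemma Ins_all r d u v : Ins d u v -> all (fun x : 'X_{1..r} => mdeg x == d) u ->
  all (fun x : 'X_{1..r} => mdeg x == d) v.
Proof.
elim=> // u' v' p w _ IH Hw _ Hu; rewrite all_ins IH // andbT; exact/eqP.
Qed.

Lemma split_mnm r (y : 'X_{1..r}) d' : (d' <= mdeg y)%N -> exists c, Rm c y /\ mdeg c = d'.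
Proof.
elim: d' => [|d' IH] H.
  by exists 0%MM; split; [move=> j; rewrite mnm0E | exact: mdeg0].
have [c [Rc Ec]] := IH (ltnW H).
have [j Hj] : exists j, (c j < y j)%N.
  apply: NNPP => N; move: H; rewrite -Ec !mdegE ltnNge; apply/negP/negPn.
  by apply: leq_sum => j _; rewrite leqNgt; apply/negP => Hl; apply: N; exists j.
exists (c + U_(j))%MM; split; last by rewrite mdegD mdeg1 Ec addn1.
move=> i; rewrite mnmDE mnm1E; case: eqP => [<-|_]; first by rewrite addn1.
by rewrite addn0.
Qed.

Lemma emb_Ins r d' d (Hd : (d' <= d)%N) (be : seq 'X_{1..r}) : forall u,
  emb (@Rm r) u be -> all (fun x : 'X_{1..r} => mdeg x == d) be ->
  exists v, Ins d' u v /\ size v = size be /\ forall i, Rm (nth 0%MM v i) (nth 0%MM be i).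
Proof.
elim: be => [|y be IH] u /=.
  move=> -> _; exists [::]; split; first exact: Ins_refl.
  by split => // i j; rewrite !nth_nil.
move=> Hemb /andP [/eqP Hy Hall].
case: Hemb => [Hemb|].
  have [v [Iv [Sv Rv]]] := IH u Hemb Hall.
  have [c [Rc Ec]] : exists c, Rm c y /\ mdeg c = d' by apply: split_mnm; rewrite Hy.
  exists (ins 0 c v); split; first exact: Ins_step.
  split; first by rewrite size_ins // Sv.
  by rewrite /ins take0 drop0; case=> [|i] /=.
case: u => [_|x u [Rxy Hemb]].
  have [v [Iv [Sv Rv]]] := IH [::] (emb_nil _ _) Hall.
  have [c [Rc Ec]] : exists c, Rm c y /\ mdeg c = d' by apply: split_mnm; rewrite Hy.
  exists (ins 0 c v); split; first exact: Ins_step.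
  split; first by rewrite size_ins // Sv.
  by rewrite /ins take0 drop0; case=> [|i] /=.
have [v [Iv [Sv Rv]]] := IH u Hemb Hall.
exists (x :: v); split; first exact: Ins_cons.
by split; [rewrite /= Sv|case].
Qed.

Section Stages.
Variables (k : comNzRingType) (r : nat) (J : bihomset k r).
Arguments J : clear implicits.
Hypothesis HJ : is_ideal J.

Lemma stage1 d u v : Ins d u v -> forall n (f : {mpoly k[n * r]}) al c,
  word al = u -> J d n f -> LTc f al c ->
  exists N (h : {mpoly k[N * r]}) al', word al' = v /\ J d N h /\ LTc h al' c.
Proof.
elim=> [u' n f al c Wu Jf Lf|u' v' p w _ IH Hw Hp n f al c Wu Jf Lf].
  by exists n, f, al.
have [N [h [al' [Wv [Jh Lh]]]]] := IH n f al c Wu Jf Lf.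
have HpN : (p <= N)%N by rewrite -(size_word al') Wv.
have [h' [al'' [Jh' [Lh' Wh']]]] := ins_step HJ Hw HpN Jh Lh.
by exists N.+1, h', al''; rewrite Wh' Wv.
Qed.

Lemma stage2 d' d n (h : {mpoly k[n * r]}) al c (be : 'X_{1..n * r}) :
  (d' <= d)%N -> J d' n h -> LTc h al c ->
  (forall i : 'I_n, Rm (block al i) (block be i)) ->
  (forall i, mdeg (block al i) = d') -> (forall i, mdeg (block be i) = d) ->
  exists h2 : {mpoly k[n * r]}, J d n h2 /\ LTc h2 be c.
Proof.
move=> Hd Jh Lh Hb Ha Hbe.
case: HJ => _ [_ _ _ JM _].
have Hle : (al <= be)%MM.
  apply/mnm_lepP => v; case/mxvec_indexP: v => i j.
  by have := Hb i j; rewrite !mnmE.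
have HX : @multihom k r (d - d')%N n 'X_[be - al].
  move=> m; rewrite msuppX mem_seq1 => /eqP -> i.
  rewrite -(Ha i) -(Hbe i) !mdegE -sumnB.
    by apply: eq_bigr => j _; rewrite mnmBE !mnmE.
  by move=> j _; have := Hb i j; rewrite !mnmE.
have J2 := JM d' (d - d')%N n h 'X_[be - al] Jh HX.
have E : (d' + (d - d')%N)%R = d :> nat by apply: subnKC.
rewrite E in J2.
exists ('X_[be - al] * h); split => //.
rewrite -{2}(submK Hle); exact: LTc_mulX.
Qed.

Lemma reducer d' d n' n (f : {mpoly k[n' * r]}) al c (be : 'X_{1..n * r}) :
  J d' n' f -> LTc f al c ->
  (forall i, mdeg (block al i) = d') -> (forall i, mdeg (block be i) = d) ->
  Rp (d', word al) (d, word be) ->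
  exists h : {mpoly k[n * r]}, J d n h /\ LTc h be c.
Proof.
move=> Jf Lf Ha Hbe [/= Hd Hemb].
have Hall : all (fun x : 'X_{1..r} => mdeg x == d) (word be).
  by apply/allP => x /mapP [i _ ->]; rewrite Hbe.
have [v [Iv [Sv Rv]]] := emb_Ins Hd Hemb Hall.
have [N [h [al' [Wv [Jh Lh]]]]] := stage1 Iv (erefl _) Jf Lf.
have EN : N = n by rewrite -(size_word al') Wv Sv size_word.
subst N.
have Hall' : all (fun x : 'X_{1..r} => mdeg x == d') v.
  apply: (Ins_all Iv); apply/allP => x /mapP [i _ ->]; by rewrite Ha.
have H1 : forall i : 'I_n, Rm (block al' i) (block be i).
  move=> i; have := Rv i; rewrite -Wv !nth_word //.
have H2 : forall i : 'I_n, mdeg (block al' i) = d'.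
  move=> i; apply/eqP; have := allP Hall' (nth 0%MM v i); rewrite -Wv nth_word; apply.
  by apply/mapP; exists i; rewrite ?mem_enum.
have [h2 [J2 L2]] := stage2 Hd Jh Lh H1 H2 Hbe.
by exists h2.
Qed.
End Stages.

Lemma is_ideal_inter (k : comNzRingType) (r : nat) (P : bihomset k r -> Prop) (J0 : bihomset k r) :
  is_ideal J0 -> P J0 -> is_ideal (fun d n p => forall J, is_ideal J -> P J -> J d n p).
Proof.
move=> HJ0 PJ0; split.
  move=> d n p H; case: (HJ0) => Hm _; exact: Hm (H J0 HJ0 PJ0).
split.
- by move=> d n J [_ [H0 _ _ _ _]] _.
- by move=> d n p q Hp Hq J HJ PJ; case: (HJ) => _ [_ HD _ _ _]; apply: HD; [exact: Hp|exact: Hq].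
- by move=> d n c p Hp J HJ PJ; case: (HJ) => _ [_ _ HZ _ _]; apply: HZ; exact: Hp.
- by move=> d e n f g Hf Hg J HJ PJ; case: (HJ) => _ [_ _ _ HM _]; apply: HM => //; exact: Hf.
- move=> d n m a b g f Hs Hg Hf J HJ PJ; case: (HJ) => _ [_ _ _ _ HS].
  by apply: HS => //; exact: Hf.
Qed.

Lemma ideal_sub (k : comNzRingType) (r : nat) (J : bihomset k r) : is_ideal J ->
  forall d n (p q : {mpoly k[n * r]}), J d n p -> J d n q -> J d n (p - q).
Proof.
move=> [_ [_ HD HZ _ _]] d n p q Hp Hq; apply: HD => //.
by rewrite -GRing.scaleN1r; apply: HZ.
Qed.

Lemma ideal_sum (k : comNzRingType) (r : nat) (J : bihomset k r) : is_ideal J ->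
  forall d n T (F : 'I_T -> {mpoly k[n * r]}), (forall i, J d n (F i)) -> J d n (\sum_i F i).
Proof.
move=> [_ [H0 HD _ _ _]] d n T F HF; apply: (big_ind (J d n)) => //.
by move=> x y; apply: HD.
Qed.

Lemma wf_min (A : Type) (lt : A -> A -> Prop) (wf : well_founded lt) (P : A -> Prop) x :
  P x -> exists y, P y /\ forall z, lt z y -> ~ P z.
Proof.
elim/(well_founded_ind wf): x => x IH Px.
case: (classic (exists z, lt z x /\ P z)) => [[z [lzx Pz]]|N].
  exact: IH lzx Pz.
exists x; split => // z lzx Pz; apply: N; by exists z.
Qed.

Record elt (k : comNzRingType) (r : nat) := Elt { ed : nat; en : nat; ep : {mpoly k[en * r]} }.

Definition Gen (k : comNzRingType) (r : nat) (l : seq (elt k r)) : bihomset k r :=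
  let e0 := @Elt k r 0 0 0 in
  @generated k r (size l) (fun i => ed (nth e0 l i)) (fun i => en (nth e0 l i))
    (fun i => ep (nth e0 l i)).

Arguments Gen {k r} l d n _.
Theorem corollary2p9 (k : comNzRingType) (r : nat) :
  noetherian k -> (0 < r)%N ->
  forall I : bihomset k r, is_ideal I -> fin_generated I.
Proof.
move=> Hnoeth _ I HI; apply: NNPP => Hnfg.
pose e0 := @Elt k r 0 0 0.
pose Inl (l : seq (elt k r)) := forall i, (i < size l)%N ->
  I (ed (nth e0 l i)) (en (nth e0 l i)) (ep (nth e0 l i)).
have GenI : forall l, Inl l -> forall d n p, Gen l d n p -> I d n p.
  move=> l Hl d n p H; apply: H => // i; exact: Hl (ltn_ord i).
have GenId : forall l, Inl l -> is_ideal (Gen l).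
  move=> l Hl; apply: (is_ideal_inter (J0 := I)) => // i; exact: Hl (ltn_ord i).
have Hstep : forall l, exists e : elt k r, Inl l ->
    [/\ I (ed e) (en e) (ep e), ~ Gen l (ed e) (en e) (ep e) &
      forall p' : {mpoly k[en e * r]}, I (ed e) (en e) p' -> ~ Gen l (ed e) (en e) p' ->
        ~ (mlead p' < mlead (ep e))%O].
  move=> l; case: (classic (Inl l)) => [Hl|Hl]; last by exists e0.
  have [d [n [p [Ip Gp]]]] : exists d n p, I d n p /\ ~ Gen l d n p.
    apply: NNPP => N; apply: Hnfg.
    exists (size l), (fun i => ed (nth e0 l i)), (fun i => en (nth e0 l i)),
      (fun i => ep (nth e0 l i)).
    move=> d n p; split; last exact: GenI.
    move=> Ip; apply: NNPP => Gp; apply: N; by exists d, n, p.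
  pose P (m : 'X_{1..n * r}) := exists p', I d n p' /\ ~ Gen l d n p' /\ mlead p' = m.
  have [m [[p' [Ip' [Gp' Em]]] Hmin]] :=
    @wf_min _ _ (@ltom_wf (n * r)) P (mlead p) (ex_intro _ p (conj Ip (conj Gp erefl))).
  exists (@Elt k r d n p') => _; split => // p'' Ip'' Gp'' lt.
  apply: (Hmin (mlead p'')); first by rewrite /= Em in lt.
  by exists p''.
have [st Hst] := choice_fun Hstep.
pose pre := fix pre j := if j is j'.+1 then rcons (pre j') (st (pre j')) else [::].
pose f j := st (pre j).
have size_pre : forall j, size (pre j) = j.
  by elim=> [|j IH] //=; rewrite size_rcons IH.
have nth_pre : forall j i, (i < j)%N -> nth e0 (pre j) i = f i.
  elim=> [|j IH] i //= Hi; rewrite nth_rcons size_pre.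
  case: (ltnP i j) => Hin; first exact: IH.
  have -> : i = j by apply/eqP; rewrite eqn_leq Hin -ltnS Hi.
  by rewrite eqxx.
have Inl_pre : forall j, Inl (pre j).
  elim=> [|j IH] i //=; rewrite size_rcons ltnS leq_eqVlt => /orP [/eqP ->|Hi].
    rewrite nth_rcons ltnn eqxx; by case: (Hst _ IH).
  rewrite nth_rcons Hi; exact: IH.
have Hf : forall j, [/\ I (ed (f j)) (en (f j)) (ep (f j)),
    ~ Gen (pre j) (ed (f j)) (en (f j)) (ep (f j)) &
    forall p' : {mpoly k[en (f j) * r]}, I (ed (f j)) (en (f j)) p' ->
       ~ Gen (pre j) (ed (f j)) (en (f j)) p' -> ~ (mlead p' < mlead (ep (f j)))%O].
  move=> j; exact: Hst _ (Inl_pre j).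
have nz : forall j, ep (f j) != 0.
  move=> j; apply/eqP => E; case: (Hf j) => _ G _; apply: G; rewrite E => J HJ _.
  by case: HJ => _ [H0 _ _ _ _].
have blk_deg : forall j (i : 'I_(en (f j))), mdeg (block (mlead (ep (f j))) i) = ed (f j).
  move=> j i; case: (Hf j) => Ij _ _; case: HI => Hm _.
  rewrite mdegE -(Hm _ _ _ Ij (mlead (ep (f j))) (mlead_supp (nz j)) i).
  by apply: eq_bigr => jj _; rewrite mnmE.
have gen_in : forall j i, (i < j)%N -> Gen (pre j) (ed (f i)) (en (f i)) (ep (f i)).
  move=> j i lt J HJ HG.
  have lt' : (i < size (pre j))%N by rewrite size_pre.
  have := HG (Ordinal lt'); rewrite /= nth_pre //.
have [sg [sgm sgR]] := Rp_chain (fun j => (ed (f j), word (mlead (ep (f j))))).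
pose lc t := mleadc (ep (f (sg t))).
pose Jk (x : k) := exists t (c : nat -> k), x = \sum_(l < t) c l * lc l.
have ext : forall t t' (c : nat -> k), (t <= t')%N ->
    exists c' : nat -> k, \sum_(l < t) c l * lc l = \sum_(l < t') c' l * lc l.
  move=> t t' c H; exists (fun l => if (l < t)%N then c l else 0).
  rewrite (big_ord_widen _ (fun l => c l * lc l) H) big_mkcond /=.
  by apply: eq_bigr => l _; case: ifP => _; rewrite ?GRing.mul0r.
have Jk_ideal : ring_ideal Jk.
  split.
  - by exists 0%N, (fun=> 0); rewrite big_ord0.
  - move=> x y [t1 [c1 ->]] [t2 [c2 ->]].
    have [c1' E1] := ext t1 (maxn t1 t2) c1 (leq_maxl _ _).
    have [c2' E2] := ext t2 (maxn t1 t2) c2 (leq_maxr _ _).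
    exists (maxn t1 t2), (fun l => c1' l + c2' l); rewrite E1 E2 -big_split.
    by apply: eq_bigr => l _; rewrite GRing.mulrDl.
  - move=> a x [t [c ->]]; exists t, (fun l => a * c l); rewrite GRing.mulr_sumr.
    by apply: eq_bigr => l _; rewrite GRing.mulrA.
have [s Hs] := Hnoeth Jk Jk_ideal.
have Hsi : forall i : 'I_(size s), exists tc : nat * (nat -> k),
    s`_i = \sum_(l < tc.1) tc.2 l * lc l.
  move=> i; have [_ H] := Hs s`_i.
  have [t [c E]] : Jk s`_i.
    apply: H; exists (fun j => (j == i)%:R).
    rewrite (bigD1 i) //= eqxx GRing.mul1r big1 ?GRing.addr0 // => j /negbTE ->.
    by rewrite GRing.mul0r.
  by exists (t, c).
have [tc Htc] := choice_fun Hsi.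
pose T := (\max_(i < size s) (tc i).1)%N.
have HT : forall x, Jk x -> exists c : nat -> k, x = \sum_(l < T) c l * lc l.
  move=> x /Hs [a ->].
  have Hi : forall i : 'I_(size s), exists c : nat -> k, s`_i = \sum_(l < T) c l * lc l.
    move=> i; rewrite Htc; apply: ext; exact: leq_bigmax.
  have [cc Hcc] := choice_fun Hi.
  exists (fun l => \sum_i a i * cc i l).
  under eq_bigr => i _ do rewrite Hcc GRing.mulr_sumr.
  rewrite exchange_big /=; apply: eq_bigr => l _; rewrite GRing.mulr_suml.
  by apply: eq_bigr => i _; rewrite GRing.mulrA.
have [cT HcT] : exists c : nat -> k, lc T = \sum_(l < T) c l * lc l.
  apply: HT; exists T.+1, (fun l => (l == T)%:R).
  rewrite big_ord_recr /= eqxx GRing.mul1r big1 ?GRing.add0r // => l _.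
  by rewrite (ltn_eqF (ltn_ord l)) GRing.mul0r.
pose F := f (sg T).
pose d := ed F; pose n := en F; pose p := ep F; pose al := mlead p.
case: (Hf (sg T)) => IF GF minF.
have Hh : forall l : 'I_T, exists h : {mpoly k[n * r]},
   (forall J, is_ideal J -> J (ed (f (sg l))) (en (f (sg l))) (ep (f (sg l))) -> J d n h)
   /\ LTc h al (lc l).
  move=> l; pose P (J : bihomset k r) := J (ed (f (sg l))) (en (f (sg l))) (ep (f (sg l))).
  have JallI : is_ideal (fun d n p => forall J, is_ideal J -> P J -> J d n p).
    by apply: (is_ideal_inter (J0 := I)) => //; case: (Hf (sg l)).
  have [] := @reducer k r _ JallI (ed (f (sg l))) d (en (f (sg l))) n (ep (f (sg l)))
     (mlead (ep (f (sg l)))) (lc l) al.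
  - by move=> J HJ PJ.
  - split => //; exact: msupp_le_mlead.
  - exact: blk_deg.
  - exact: blk_deg.
  - exact: sgR (ltn_ord l).
  - by move=> h [Jh Lh]; exists h.
have [hh Hhh] := choice_fun Hh.
pose p' := p - \sum_(l < T) cT l *: hh l.
have hhI : forall l, I d n (hh l).
  by move=> l; apply: (proj1 (Hhh l)) => //; case: (Hf (sg l)).
have Ip' : I d n p'.
  apply: ideal_sub => //; apply: ideal_sum => // l.
  case: (HI) => _ [_ _ HZ _ _]; exact: HZ.
have Gp' : ~ Gen (pre (sg T)) d n p'.
  move=> G'; apply: GF.
  have -> : ep (f (sg T)) = p' + \sum_(l < T) cT l *: hh l by rewrite GRing.subrK.
  have GI := GenId _ (Inl_pre (sg T)); case: (GI) => _ [_ HD HZ _ _].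
  apply: HD; first exact: G'.
  apply: (ideal_sum GI) => l; apply: HZ.
  apply: (proj1 (Hhh l) (Gen (pre (sg T))) GI); exact: gen_in (sgm _ _ (ltn_ord l)).
have coefp' : forall m, (al < m)%O \/ m = al -> p'@_m = 0.
  move=> m H; rewrite /p' mcoeffB raddf_sum /=.
  case: H => [H|->].
    rewrite mcoeff_gt_mlead // GRing.sub0r big1 ?GRing.oppr0 // => l _.
    rewrite mcoeffZ memN_msupp_eq0 ?GRing.mulr0 //; apply/negP => Hm.
    by have := (proj2 (proj2 (Hhh l)) m Hm); rewrite leNgt H.
  have -> : p@_al = lc T by [].
  rewrite HcT; apply/eqP; rewrite GRing.subr_eq0; apply/eqP; apply: eq_bigr => l _.
  by rewrite mcoeffZ (proj1 (proj2 (Hhh l))).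
have nz' : p' != 0.
  apply/eqP => E; apply: Gp'; rewrite E => J HJ _; by case: HJ => _ [H0 _ _ _ _].
have lt' : (mlead p' < al)%O.
  have Hs' := mlead_supp nz'; rewrite mcoeff_msupp in Hs'.
  case: (ltgtP (mlead p') al) => // H; move: Hs'; rewrite coefp' ?eqxx //; by [left|right].
exact: minF p' Ip' Gp' lt'.

Qed.
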